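(* Let $1\le q\le p\le\infty$, $E$ a Banach space, $Y$ a Banach lattice and $T:E\to Y$ a bounded linear operator. Then $T$ is positive $(p,q)$-majorizing if and only if $T$ is positive strongly $(p,q)$-summing.
   Context: $p^{\ast},q^{\ast}$ denote conjugate exponents. For a finite family $(y_i^{\ast})$ in $Y^{\ast}$, $\|(y_i^{\ast})\|_{p^{\ast},\omega}=\sup_{y\in B_{Y}}\|(\langle y_i^{\ast},y\rangle)_i\|_{p^{\ast}}$. $T$ is positive $(p,q)$-majorizing if there is $C>0$ such that $(\sum_{i=1}^n|\langle T(z_i),y_i^{\ast}\rangle|^{q^{\ast}})^{1/q^{\ast}}\le C\|(y_i^{\ast})_{i=1}^n\|_{p^{\ast},\omega}$ for all $n$, all $z_1,\dots,z_n\in B_E$ and all positive $y_1^{\ast},\dots,y_n^{\ast}\in Y^{\ast}$. $T$ is positive strongly $(p,q)$-summing if there is $C>0$ with $\sum_{i=1}^n|\langle T(x_i),y_i^{\ast}\rangle|\le C(\sum_i\|x_i\|^q)^{1/q}\|(y_i^{\ast})_{i=1}^n\|_{p^{\ast},\omega}$ for all $n$, all $x_i\in E$ and all positive $y_i^{\ast}\in Y^{\ast}$. *)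

(* Defs.v *)
From HB Require Import structures.
From mathcomp Require Import all_boot all_order all_algebra.
From mathcomp Require Import all_classical all_reals all_analysis.
Set Implicit Arguments. Unset Strict Implicit. Unset Printing Implicit Defensive.
Import Order.TTheory GRing.Theory Num.Theory.
Import numFieldNormedType.Exports.
Local Open Scope classical_set_scope.
Local Open Scope ring_scope.

Section Defs.
Variable R : realType.

Definition is_linear (U V : lmodType R) (f : U -> V) : Prop :=
  forall (a : R) (x y : U), f (a *: x + y) = a *: f x + f y.

Definition bounded_linear (U V : normedModType R) (f : U -> V) : Prop :=
  is_linear f /\ continuous f.

Definition lat_abs (Y : normedModType R) (join : Y -> Y -> Y) (x : Y) : Y :=
  join x (- x).

Definition is_banach_lattice (Y : completeNormedModType R)
    (le : Y -> Y -> Prop) (join : Y -> Y -> Y) : Prop :=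
  (forall x, le x x) /\
  (forall x y, le x y -> le y x -> x = y) /\
  (forall x y z, le x y -> le y z -> le x z) /\
  (forall x y z, le x y -> le (x + z) (y + z)) /\
  (forall (a : R) x y, 0 <= a -> le x y -> le (a *: x) (a *: y)) /\
  (forall x y, le x (join x y) /\ le y (join x y)
               /\ forall z, le x z -> le y z -> le (join x y) z) /\
  (forall x y, le (lat_abs join x) (lat_abs join y) -> `|x| <= `|y|).

Definition is_dual (Y : normedModType R) (f : Y -> R) : Prop :=
  is_linear (f : Y -> R^o) /\ continuous f.

Definition is_pos_dual (Y : normedModType R) (le : Y -> Y -> Prop)
    (f : Y -> R) : Prop :=
  is_dual f /\ forall y, le 0 y -> 0 <= f y.

Definition conj_exp (p : \bar R) : \bar R :=
  match p with
  | r%:E => if r == 1 then +oo%E else (r / (r - 1))%:E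
  | +oo%E => 1%E
  | -oo%E => -oo%E
  end.

Definition lnorm_fin (r : \bar R) (n : nat) (a : 'I_n -> R) : R :=
  match r with
  | s%:E => (\sum_(i < n) `|a i| `^ s) `^ s^-1
  | +oo%E => \big[Num.max/0]_(i < n) `|a i|
  | -oo%E => 0
  end.

Definition weak_norm (Y : normedModType R) (r : \bar R) (n : nat)
    (ys : 'I_n -> Y -> R) : \bar R :=
  ereal_sup [set (lnorm_fin r (fun i => ys i y))%:E | y in [set y : Y | `|y| <= 1]].

Definition pos_majorizing (E : normedModType R) (Y : normedModType R)
    (le : Y -> Y -> Prop) (p q : \bar R) (T : E -> Y) : Prop :=
  exists C : R, 0 < C /\
    forall (n : nat) (z : 'I_n -> E) (ys : 'I_n -> Y -> R),
      (forall i, `|z i| <= 1) -> (forall i, is_pos_dual le (ys i)) ->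
      ((lnorm_fin (conj_exp q) (fun i => ys i (T (z i))))%:E
        <= C%:E * weak_norm (conj_exp p) ys)%E.

Definition pos_strongly_summing (E : normedModType R) (Y : normedModType R)
    (le : Y -> Y -> Prop) (p q : \bar R) (T : E -> Y) : Prop :=
  exists C : R, 0 < C /\
    forall (n : nat) (x : 'I_n -> E) (ys : 'I_n -> Y -> R),
      (forall i, is_pos_dual le (ys i)) ->
      ((\sum_(i < n) `|ys i (T (x i))|)%:E
        <= (C * lnorm_fin q (fun i => `|x i|))%:E * weak_norm (conj_exp p) ys)%E.

End Defs.

(* Main.v *)
Require Import Defs.
From HB Require Import structures.
From mathcomp Require Import all_boot all_order all_algebra.
From mathcomp Require Import all_classical all_reals all_analysis.
From mathcomp Require Import ring lra.
Import Order.TTheory GRing.Theory Num.Theory.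
Import numFieldNormedType.Exports.
Local Open Scope ring_scope.

Section S1.
Variable R : realType.

Lemma inv_powR (a s : R) : 0 <= a -> (a^-1) `^ s = (a `^ s)^-1.
Proof. by move=> a0; rewrite -powR_inv1 // -powRrM mulN1r powRN. Qed.

Lemma resc (x y u v : R) : u != 0 -> v != 0 -> x * y = u * v * ((x / u) * (y / v)).
Proof. by move=> u0 v0; rewrite mulrACA (mulrC u) (mulrC v) !divfK. Qed.

Lemma norm_pow (x a A : R) (s : R) : 0 <= x -> 0 < a -> a `^ s = A ->
  (x / a) `^ s = x `^ s / A.
Proof.
move=> x0 a0 <-; rewrite powRM //; last by rewrite invr_ge0 ltW.
by rewrite inv_powR // ltW.
Qed.

Lemma holder_core n (b t : 'I_n -> R) (s r A B al be : R) : 0 < s -> 0 < r ->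
  s^-1 + r^-1 = 1 -> (forall i, 0 <= b i) -> (forall i, 0 <= t i) ->
  0 < al -> 0 < be -> 0 < A -> 0 < B ->
  \sum_i b i `^ s = A -> \sum_i t i `^ r = B -> al `^ s = A -> be `^ r = B ->
  \sum_i b i * t i <= al * be.
Proof.
move=> s0 r0 sr b0 t0 alp bep Ap Bp eA eB als ber.
have -> : \sum_i b i * t i = al * be * \sum_i (b i / al) * (t i / be).
  rewrite big_distrr /=; apply: eq_bigr => i _.
  exact: (resc (b i) (t i) al be (negbT (gt_eqF alp)) (negbT (gt_eqF bep))).
rewrite -[leRHS]mulr1; apply: ler_wpM2l; first exact: (mulr_ge0 (ltW alp) (ltW bep)).
apply: (@le_trans _ _ (\sum_i ((b i / al) `^ s / s + (t i / be) `^ r / r))).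
  apply: ler_sum => i _; apply: conjugate_powR => //.
    exact: divr_ge0 (b0 i) (ltW alp).
  exact: divr_ge0 (t0 i) (ltW bep).
rewrite big_split /=.
under eq_bigr do rewrite (norm_pow _ _ _ _ (b0 _) alp als).
under [X in _ + X]eq_bigr do rewrite (norm_pow _ _ _ _ (t0 _) bep ber).
rewrite -!mulr_suml eA eB !mulfV ?(gt_eqF Ap) ?(gt_eqF Bp) // !mul1r sr.
exact: lexx.
Qed.

Lemma sum_pow_eq0 n (b : 'I_n -> R) s : (forall i, 0 <= b i) ->
  \sum_i b i `^ s = 0 -> forall i, b i = 0.
Proof.
move=> b0 e i; apply: (@powR_eq0_eq0 _ _ s).
move/eqP: e; rewrite psumr_eq0 => [|j _]; last exact: powR_ge0.
by move=> /allP/(_ i (mem_index_enum _))/implyP/(_ isT)/eqP.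
Qed.

Lemma holder_real n (b t : 'I_n -> R) (s r : R) : 0 < s -> 0 < r ->
  s^-1 + r^-1 = 1 -> (forall i, 0 <= b i) -> (forall i, 0 <= t i) ->
  \sum_i b i * t i <= (\sum_i b i `^ s) `^ s^-1 * (\sum_i t i `^ r) `^ r^-1.
Proof.
move=> s0 r0 sr b0 t0.
have rhs0 : 0 <= (\sum_i b i `^ s) `^ s^-1 * (\sum_i t i `^ r) `^ r^-1.
  exact: mulr_ge0 (powR_ge0 _ _) (powR_ge0 _ _).
have [Ae|An] := eqVneq (\sum_i b i `^ s) 0.
  rewrite big1 // => i _; by rewrite (@sum_pow_eq0 _ _ _ b0 Ae) mul0r.
have [Be|Bn] := eqVneq (\sum_i t i `^ r) 0.
  rewrite big1 // => i _; by rewrite (@sum_pow_eq0 _ _ _ t0 Be) mulr0.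
move: An Bn rhs0.
move eA : (\sum_i b i `^ s) => A; move eB : (\sum_i t i `^ r) => B => An Bn _.
have A0 : 0 <= A by rewrite -eA; apply: sumr_ge0 => i _; exact: powR_ge0.
have B0 : 0 <= B by rewrite -eB; apply: sumr_ge0 => i _; exact: powR_ge0.
have Ap : 0 < A by rewrite lt_neqAle eq_sym An.
have Bp : 0 < B by rewrite lt_neqAle eq_sym Bn.
apply: (@holder_core _ _ _ _ _ _ _ _ _ s0 r0 sr b0 t0 _ _ Ap Bp eA eB).
- exact: powR_gt0.
- exact: powR_gt0.
- by rewrite -powRrM mulVf ?gt_eqF // powRr1 // ltW.
- by rewrite -powRrM mulVf ?gt_eqF // powRr1 // ltW.
Qed.
Lemma rs_eq (s : R) : 1 < s -> (s / (s - 1) - 1) * s = s / (s - 1).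
Proof. move=> s1; have h : s - 1 != 0 by rewrite subr_eq0 gt_eqF. field. done. Qed.

Lemma dual_real n (t : 'I_n -> R) (s : R) : 1 < s -> (forall i, 0 <= t i) ->
  exists a : 'I_n -> R, (forall i, 0 <= a i) /\ (\sum_i a i `^ s) `^ s^-1 <= 1 /\
  (\sum_i t i `^ (s / (s - 1))) `^ (s / (s - 1))^-1 <= \sum_i a i * t i.
Proof.
move=> s1 t0; set r := s / (s - 1).
have s0 : 0 < s by apply: lt_trans s1.
have s10 : 0 < s - 1 by rewrite subr_gt0.
have r0 : 0 < r by rewrite divr_gt0.
set S := \sum_i t i `^ r.
have S0 : 0 <= S by apply: sumr_ge0 => i _; exact: powR_ge0.
have [Se|Sn] := eqVneq S 0.
  exists (fun=> 0); split => //; split.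
    rewrite big1 => [|i _]; last by rewrite powR0 // gt_eqF.
    by rewrite powR0 // invr_eq0 gt_eqF.
  by rewrite Se big1 ?powR0 ?invr_eq0 ?gt_eqF // => i _; rewrite mul0r.
have Sp : 0 < S by rewrite lt_neqAle eq_sym Sn.
set N := S `^ r^-1.
have Np : 0 < N by apply: powR_gt0.
have Nr : N `^ r = S by rewrite -powRrM mulVf ?gt_eqF // powRr1 ?ltW.
exists (fun i => t i `^ (r - 1) / N `^ (r - 1)); split.
  by move=> i; rewrite divr_ge0 ?powR_ge0.
split.
  under eq_bigr do rewrite powRM ?powR_ge0 ?invr_ge0 ?powR_ge0 // inv_powR ?powR_ge0 // -!powRrM rs_eq // mulVf ?gt_eqF // powRr1 ?ltW //.
  by rewrite -mulr_suml -/S mulfV ?gt_eqF // powR1.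
under eq_bigr do rewrite mulrAC (mulrC (t _ `^ _)) mulr_powRB1 ?t0 //.
rewrite -mulr_suml -/S -Nr -powRB ?gt_eqF ?implybT //.
  by rewrite opprB addrC subrK powRr1 ?(ltW Np).
by lra.
Qed.
Lemma lnorm_ge0 (r : \bar R) n (a : 'I_n -> R) : 0 <= lnorm_fin r a.
Proof.
case: r => [s| |] /=; [exact: powR_ge0| |done].
exact: bigmax_ge_id.
Qed.

Lemma lnorm1 n (a : 'I_n -> R) : lnorm_fin 1%:E a = \sum_i `|a i|.
Proof.
rewrite /= invr1 powRr1; last by apply: sumr_ge0 => i _; exact: powR_ge0.
by apply: eq_bigr => i _; rewrite powRr1.
Qed.

Lemma conj_s (s : R) : 1 < s -> conj_exp s%:E = (s / (s - 1))%:E.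
Proof. by move=> s1; rewrite /conj_exp gt_eqF. Qed.

Lemma conj_inv (s : R) : 1 < s -> s^-1 + (s / (s - 1))^-1 = 1.
Proof. move=> s1; have h : s - 1 != 0 by rewrite subr_eq0 gt_eqF.
have h2 : s != 0 by rewrite gt_eqF // (lt_trans ltr01).
field. by rewrite h h2. Qed.
End S1.

Section S2.
Variable R : realType.

Lemma mono_s (s : R) n (a b : 'I_n -> R) : 1 <= s ->
  (forall i, `|b i| <= `|a i|) -> lnorm_fin s%:E b <= lnorm_fin s%:E a.
Proof.
move=> s1 ba /=.
have s0 : 0 < s by apply: lt_le_trans s1.
apply: ge0_ler_powR.
- by rewrite invr_ge0 ltW.
- by rewrite nnegrE; apply: sumr_ge0 => i _; exact: powR_ge0.
- by rewrite nnegrE; apply: sumr_ge0 => i _; exact: powR_ge0.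
apply: ler_sum => i _; apply: (ge0_ler_powR (ltW s0) _ _ (ba i)); exact: normr_ge0.
Qed.

Lemma mono_inf n (a b : 'I_n -> R) :
  (forall i, `|b i| <= `|a i|) -> lnorm_fin +oo%E b <= lnorm_fin +oo%E a.
Proof.
move=> ba /=; apply: bigmax_le; first exact: bigmax_ge_id.
by move=> i _; apply: le_trans (ba i) _; exact: le_bigmax.
Qed.

Lemma dual_inf n (t : 'I_n -> R) :
  exists a : 'I_n -> R, (forall i, 0 <= a i) /\ lnorm_fin +oo%E a <= 1 /\
    lnorm_fin 1%:E t <= \sum_i a i * `|t i|.
Proof.
exists (fun=> 1); split; first by move=> i; exact: ler01.
split.
  by apply: bigmax_le => [|i _]; rewrite ?normr1 ?ler01.
by rewrite lnorm1; apply: ler_sum => i _; rewrite mul1r.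
Qed.

Lemma dual_one n (t : 'I_n -> R) :
  exists a : 'I_n -> R, (forall i, 0 <= a i) /\ lnorm_fin 1%:E a <= 1 /\
    lnorm_fin +oo%E t <= \sum_i a i * `|t i|.
Proof.
case: n t => [|n] t.
  exists (fun=> 0); split; first by move=> i; exact: lexx.
  rewrite lnorm1 /lnorm_fin !big_ord0; split; [exact: ler01 | exact: lexx].
have [k _ ek] := @eq_bigmax _ _ _ 0 ord0 xpredT (fun i => `|t i|) isT (fun i _ => normr_ge0 (t i)).
exists (fun i => (i == k)%:R); split.
  by move=> i; case: (i == k); [exact: ler01|exact: lexx].
split.
  rewrite lnorm1 (bigD1 k isT) big1 => [|i]; last first.
    by move=> /andP[_ /negbTE ->]; rewrite normr0.
  rewrite eqxx normr1 Monoid.mulm1; exact: lexx.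
rewrite /lnorm_fin ek (bigD1 k isT) big1 => [|i]; last first.
  by move=> /andP[_ /negbTE ->]; rewrite mul0r.
rewrite eqxx mul1r Monoid.mulm1; exact: lexx.
Qed.

Lemma dual_s (s : R) n (t : 'I_n -> R) : 1 < s ->
  exists a : 'I_n -> R, (forall i, 0 <= a i) /\ lnorm_fin s%:E a <= 1 /\
    lnorm_fin (s / (s - 1))%:E t <= \sum_i a i * `|t i|.
Proof.
move=> s1.
have [a [a0 [h1 h2]]] := @dual_real R n (fun i => `|t i|) s s1 (fun i => normr_ge0 (t i)).
exists a; split; first exact: a0.
split; last exact: h2.
have e : \sum_i `|a i| `^ s = \sum_i a i `^ s.
  by apply: eq_bigr => i _; rewrite ger0_norm.
rewrite /lnorm_fin e; exact: h1.
Qed.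
End S2.

Section S3.
Variable R : realType.

Lemma holder_q (q : \bar R) : (1 <= q)%E -> forall n (b t : 'I_n -> R),
  (forall i, 0 <= b i) ->
  \sum_i b i * `|t i| <= lnorm_fin q b * lnorm_fin (conj_exp q) t.
Proof.
case: q => [s| |] //; last first.
  move=> _ n b t b0; rewrite /conj_exp lnorm1 /= mulr_sumr.
  apply: ler_sum => i _; apply: ler_wpM2r => //.
  by rewrite -(ger0_norm (b0 i)); exact: le_bigmax.
rewrite lee_fin le_eqVlt => /predU1P[<-|s1] n b t b0.
  rewrite lnorm1 /conj_exp eqxx /= mulr_suml.
  apply: ler_sum => i _; rewrite (ger0_norm (b0 i)); apply: ler_wpM2l => //.
  exact: le_bigmax.
rewrite conj_s //=.
have := @holder_real R n b (fun i => `|t i|) s (s / (s - 1)).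
have e : \sum_i `|b i| `^ s = \sum_i b i `^ s.
  by apply: eq_bigr => i _; rewrite ger0_norm.
rewrite e; apply.
- exact: lt_trans s1.
- by rewrite divr_gt0 ?subr_gt0 // (lt_trans ltr01).
- exact: conj_inv.
- done.
- by [].
Qed.

Lemma dual_q (q : \bar R) : (1 <= q)%E -> forall n (t : 'I_n -> R),
  exists a : 'I_n -> R, (forall i, 0 <= a i) /\ lnorm_fin q a <= 1 /\
    lnorm_fin (conj_exp q) t <= \sum_i a i * `|t i|.
Proof.
case: q => [s| |]; last by move=> h; exfalso; move: h; rewrite leeNy_eq.
  rewrite lee_fin le_eqVlt => /predU1P[<-|s1] n t.
    rewrite /conj_exp eqxx; exact: dual_one.
  rewrite (@conj_s R s s1); exact: dual_s.
by move=> _ n t; exact: dual_inf.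
Qed.

Lemma mono_q (q : \bar R) : (1 <= q)%E -> forall n (a b : 'I_n -> R),
  (forall i, `|b i| <= `|a i|) -> lnorm_fin q b <= lnorm_fin q a.
Proof.
case: q => [s| |]; last by move=> h; exfalso; move: h; rewrite leeNy_eq.
  rewrite lee_fin => s1 n a b; exact: mono_s.
by move=> _ n a b; exact: mono_inf.
Qed.
End S3.

Lemma lin_scale (R : realType) (U V : lmodType R) (f : U -> V) :
  is_linear f -> forall a x, f (a *: x) = a *: f x.
Proof.
move=> fl.
have f0 : f 0 = 0.
  have h := fl 1 0 0; rewrite !scale1r addr0 in h.
  by apply: (addrI (f 0)); rewrite addr0 -h.
by move=> a x; rewrite -[a *: x]addr0 fl f0 addr0.
Qed.

Lemma weak_ge0 (R : realType) (Y : normedModType R) (r : \bar R) n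
   (ys : 'I_n -> Y -> R) : (0 <= weak_norm r ys)%E.
Proof.
rewrite /weak_norm; apply: (@le_trans _ _ (lnorm_fin r (fun i => ys i 0))%:E).
  rewrite lee_fin; exact: lnorm_ge0.
apply: ereal_sup_ubound; exists 0; last by [].
rewrite /= normr0; exact: ler01.
Qed.

Theorem theorem3p5 (R : realType) (p q : \bar R)
    (E : completeNormedModType R) (Y : completeNormedModType R)
    (le : Y -> Y -> Prop) (join : Y -> Y -> Y) (T : E -> Y) :
  (1 <= q)%E -> (q <= p)%E ->
  is_banach_lattice le join ->
  bounded_linear T ->
  pos_majorizing le p q T <-> pos_strongly_summing le p q T.
Proof.
move=> q1 _ _ [Tlin _].
have TZ := @lin_scale _ _ _ _ Tlin.
have fZ : forall f : Y -> R, is_pos_dual le f -> forall a y, f (a *: y) = a * f y.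
  by move=> f [[fl _] _] a y; exact: (@lin_scale _ _ _ _ fl a y).
split.
  move=> [C [C0 HC]]; exists C; split; first exact: C0.
  move=> n x ys hys.
  pose z := fun i => `|x i|^-1 *: x i.
  have zn i : `|z i| <= 1.
    rewrite /z normrZ normfV normr_id.
    have [x0|x0] := eqVneq `|x i| 0.
      by rewrite x0 invr0 mul0r; exact: ler01.
    by rewrite mulVf // ; exact: lexx.
  have xz i : x i = `|x i| *: z i.
    rewrite /z scalerA.
    have [x0|x0] := eqVneq `|x i| 0.
      by rewrite x0 mul0r scale0r; apply/eqP; rewrite -normr_eq0 x0.
    by rewrite mulfV // scale1r.
  have H := HC n z ys zn hys.
  pose t := fun i => ys i (T (z i)).
  have e : \sum_i `|ys i (T (x i))| = \sum_i `|x i| * `|t i|.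
    apply: eq_bigr => i _; rewrite {1}xz TZ (fZ _ (hys i)) normrM normr_id.
    by [].
  rewrite e.
  have h1 := @holder_q R q q1 n (fun i => `|x i|) t (fun i => normr_ge0 (x i)).
  apply: le_trans (_ : ((lnorm_fin q (fun i => `|x i|))%:E * (lnorm_fin (conj_exp q) t)%:E <= _)%E).
    by rewrite -EFinM lee_fin.
  rewrite EFinM (muleC C%:E) -muleA.
  apply: lee_wpmul2l; first by rewrite lee_fin; exact: lnorm_ge0.
  exact: H.
move=> [C [C0 HC]]; exists C; split; first exact: C0.
move=> n z ys zn hys.
pose t := fun i => ys i (T (z i)).
have [a [a0 [a1 ha]]] := @dual_q R q q1 n t.
pose x := fun i => a i *: z i.
have H := HC n x ys hys.
have e : \sum_i `|ys i (T (x i))| = \sum_i a i * `|t i|.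
  apply: eq_bigr => i _; rewrite /x TZ (fZ _ (hys i)) normrM (ger0_norm (a0 i)).
  by [].
rewrite e in H.
have hL : lnorm_fin q (fun i => `|x i|) <= 1.
  apply: le_trans a1; apply: (@mono_q R q q1 n) => i.
  rewrite normr_id /x normrZ; apply: ler_piMr; first exact: normr_ge0.
  exact: zn.
apply: le_trans (_ : ((\sum_i a i * `|t i|)%:E <= _)%E).
  by rewrite lee_fin.
apply: le_trans H _.
apply: lee_wpmul2r; first exact: weak_ge0.
rewrite lee_fin; apply: ler_piMr; first exact: ltW.
exact: hL.
Qed.
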